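(* Let $\rho_n^{AB}$ be a state on $\mathcal{H}_A^{(n)}\otimes\mathcal{H}_B^{(n)}$ with $\dim\mathcal{H}_A^{(n)}=d^n$, and let $\rho_n^B$ be its reduced state on $B$. Let $\mathcal{E}^A_{n,1},\dots,\mathcal{E}^A_{n,M}$ be CPTP maps on $\mathcal{B}(\mathcal{H}_A^{(n)})$, let $\rho^{AB}_{n,i}=(\mathcal{E}^A_{n,i}\otimes\mathrm{id}^B)\rho_n^{AB}$, and let $E^{AB}_{n,1},\dots,E^{AB}_{n,M}\ge0$ with $\sum_iE^{AB}_{n,i}\le I$. Then for every real $\gamma$, the average error probability $P_e=\frac1M\sum_{i=1}^M(1-\mathrm{Tr}(\rho^{AB}_{n,i}E^{AB}_{n,i}))$ satisfies \[ P_e\ge 1-\max_i\mathrm{Tr}\Big[\{\rho^{AB}_{n,i}\ge e^{-n\gamma}I^A_n\otimes\rho^B_n\}\big(\rho^{AB}_{n,i}-e^{-n\gamma}I^A_n\otimes\rho^B_n\big)\Big]-\frac{e^{n(\log d-\gamma)}}{M}. \]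
   Context: Logarithms are natural. For self-adjoint $A=\sum_i\lambda_i|i\rangle\langle i|$, $\{A\ge0\}:=\sum_{\lambda_i\ge0}|i\rangle\langle i|$ and $\{A\ge B\}:=\{A-B\ge0\}$. $I^A_n$ denotes the identity on $\mathcal{H}_A^{(n)}$. *)

(* Defs.v *)
From HB Require Import structures.
From mathcomp Require Import all_boot all_order all_algebra.
From mathcomp Require Import complex mxtens.
From mathcomp Require Import reals sequences exp.

Set Implicit Arguments.
Unset Strict Implicit.
Unset Printing Implicit Defensive.

Import Order.TTheory GRing.Theory Num.Theory.
Local Open Scope ring_scope.

Section QDefs.
Variable R : realType.
Local Notation C := (R[i]).

Definition mxadj m n (A : 'M[C]_(m, n)) : 'M[C]_(n, m) := (map_mx Num.conj A)^T.

Definition psd n (A : 'M[C]_n) : Prop :=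
  A \is hermsymmx /\ forall v : 'cV[C]_n, 0 <= (mxadj v *m A *m v) 0 0.

Definition mxle n (A B : 'M[C]_n) : Prop := psd (B - A).

Definition density n (rho : 'M[C]_n) : Prop := psd rho /\ \tr rho = 1.

(* Indices of H_A (x) H_B: (a,b) |-> mxtens_index (a,b), consistent with tensmx. *)
Definition ket dA dB (a : 'I_dA) (b : 'I_dB) : 'I_(dA * dB) := mxtens_index (a, b).

Definition ptraceA dA dB (X : 'M[C]_(dA * dB)) : 'M[C]_dB :=
  \matrix_(b, b') \sum_(a < dA) X (ket a b) (ket a b').

Definition blockA dA dB (X : 'M[C]_(dA * dB)) (b b' : 'I_dB) : 'M[C]_dA :=
  \matrix_(a, a') X (ket a b) (ket a' b').

(* (E (x) id_B) X, for a (linear) map E on B(H_A) *)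
Definition applyA dA dB (E : 'M[C]_dA -> 'M[C]_dA) (X : 'M[C]_(dA * dB))
  : 'M[C]_(dA * dB) :=
  \matrix_(i, j) E (blockA X (mxtens_unindex i).2 (mxtens_unindex j).2)
                   (mxtens_unindex i).1 (mxtens_unindex j).1.

Definition is_linear_map dA (E : 'M[C]_dA -> 'M[C]_dA) : Prop :=
  forall (c : C) (X Y : 'M[C]_dA), E (c *: X + Y) = c *: E X + E Y.

Definition completely_positive dA (E : 'M[C]_dA -> 'M[C]_dA) : Prop :=
  forall (k : nat) (X : 'M[C]_(dA * k)), psd X -> psd (applyA E X).

Definition trace_preserving dA (E : 'M[C]_dA -> 'M[C]_dA) : Prop :=
  forall X : 'M[C]_dA, \tr (E X) = \tr X.

Definition CPTP dA (E : 'M[C]_dA -> 'M[C]_dA) : Prop :=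
  [/\ is_linear_map E, completely_positive E & trace_preserving E].

(* {A >= 0}: for A = sum_i lambda_i |i><i| (spectral decomposition
   A = U^-1 diag(lambda) U with U unitary), the projector sum_{lambda_i >= 0} |i><i| *)
Definition posproj n (A : 'M[C]_n) : 'M[C]_n :=
  invmx (spectralmx A)
  *m diag_mx (\row_i (if 0 <= spectral_diag A 0 i then 1 else 0))
  *m spectralmx A.

Definition geproj n (A B : 'M[C]_n) : 'M[C]_n := posproj (A - B).

Definition maxI M (hM : (0 < M)%N) (f : 'I_M -> R) : R :=
  \big[Num.max/f (Ordinal hM)]_(i < M) f i.

End QDefs.

(* Main.v *)
Require Import Defs.
From HB Require Import structures.
From mathcomp Require Import all_boot all_order all_algebra.
From mathcomp Require Import complex mxtens.
From mathcomp Require Import reals sequences exp.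

Import Order.TTheory GRing.Theory Num.Theory.
Local Open Scope ring_scope.
Lemma hermP {R : realType} {n} (A : 'M[R[i]]_n) :
  A \is hermsymmx <-> forall i j, A i j = Num.conj (A j i).
Proof.
split.
- move/is_hermitianmxP => H i j. rewrite {1}H !mxE /= expr0 mul1r. by [].
- move=> H; apply/is_hermitianmxP; apply/matrixP=> i j; rewrite !mxE expr0 mul1r. exact: H.
Qed.

Lemma qfE {R : realType} {n} (X : 'M[R[i]]_n) (v : 'cV[R[i]]_n) :
  (mxadj v *m X *m v) 0 0 = \sum_i \sum_j Num.conj (v i 0) * X i j * v j 0.
Proof.
rewrite mxE. under eq_bigr => j _ do rewrite mxE mulr_suml.
rewrite exchange_big /=. apply: eq_bigr => i _; apply: eq_bigr => j _.
by rewrite !mxE.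
Qed.

Lemma adjK {R : realType} m n (A : 'M[R[i]]_(m,n)) : mxadj (mxadj A) = A.
Proof. by apply/matrixP => i j; rewrite !mxE conjCK. Qed.

Lemma adj_mul {R : realType} m n p (A : 'M[R[i]]_(m,n)) (B : 'M[R[i]]_(n,p)) :
  mxadj (A *m B) = mxadj B *m mxadj A.
Proof. by rewrite /mxadj map_mxM trmx_mul. Qed.

Lemma conj_diag_ge0 {R : realType} {n} (Y U : 'M[R[i]]_n) k :
  psd Y -> 0 <= (U *m Y *m mxadj U) k k.
Proof.
case=> _ /(_ (\col_j Num.conj (U k j))); rewrite qfE => H.
suff -> : (U *m Y *m mxadj U) k k = \sum_i \sum_j Num.conj ((\col_j Num.conj (U k j)) i 0) * Y i j * (\col_j Num.conj (U k j)) j 0 by [].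
rewrite mxE. under eq_bigr => j _ do rewrite mxE mulr_suml.
rewrite exchange_big /=. apply: eq_bigr => i _; apply: eq_bigr => j _.
by rewrite !mxE conjCK.
Qed.

Lemma unitL {R : realType} {n} (U : 'M[R[i]]_n) : U \is unitarymx -> U *m mxadj U = 1%:M.
Proof. move=> /unitarymxP H. rewrite /mxadj map_trmx. exact: H. Qed.

Lemma unitR {R : realType} {n} (U : 'M[R[i]]_n) : U \is unitarymx -> mxadj U *m U = 1%:M.
Proof.
move=> hU. have := invmx_unitary hU => H. rewrite /mxadj map_trmx -H.
by rewrite mulVmx // unitarymx_unit.
Qed.

Lemma tr_conj {R : realType} {n} (U Y : 'M[R[i]]_n) (s : 'rV[R[i]]_n) :
  \tr (mxadj U *m diag_mx s *m U *m Y) = \sum_k s 0 k * (U *m Y *m mxadj U) k k.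
Proof.
rewrite -!mulmxA mxtrace_mulC -mulmxA /mxtrace.
by apply: eq_bigr => k _; rewrite mul_diag_mx mxE mulmxA.
Qed.

Lemma adjE {R : realType} m n (U : 'M[R[i]]_(m,n)) : (U ^t*)%sesqui = mxadj U.
Proof. by rewrite /mxadj map_trmx. Qed.

Lemma spec_inv {R : realType} {n} (A : 'M[R[i]]_n) :
  invmx (spectralmx A) = mxadj (spectralmx A).
Proof. have U := invmx_unitary (spectral_unitarymx A). by rewrite adjE in U. Qed.

Lemma spec_eq {R : realType} {n} {A : 'M[R[i]]_n} : A \is hermsymmx ->
  A = mxadj (spectralmx A) *m diag_mx (spectral_diag A) *m spectralmx A.
Proof.
move=> hA. have E := orthomx_spectralP (hermitian_normalmx hA).
by rewrite -spec_inv; exact E.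
Qed.

Lemma spec_diag {R : realType} {n} {A : 'M[R[i]]_n} : A \is hermsymmx ->
  spectralmx A *m A *m mxadj (spectralmx A) = diag_mx (spectral_diag A).
Proof.
move=> hA. rewrite {2}(spec_eq hA) !mulmxA unitL ?spectral_unitarymx // mul1mx.
by rewrite -mulmxA unitL ?spectral_unitarymx // mulmx1.
Qed.

Lemma psd_herm {R : realType} {n} {A : 'M[R[i]]_n} : psd A -> A \is hermsymmx.
Proof. by case. Qed.

Lemma psd_eig_ge0 {R : realType} {n} (A : 'M[R[i]]_n) k : psd A -> 0 <= spectral_diag A 0 k.
Proof.
move=> hA. have := @conj_diag_ge0 _ _ _ (spectralmx A) k hA.
by rewrite spec_diag ?psd_herm // mxE eqxx mulr1n.
Qed.

Lemma herm_eig_real {R : realType} {n} {A : 'M[R[i]]_n} k : A \is hermsymmx ->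
  spectral_diag A 0 k \is Num.real.
Proof. by move=> /hermitian_spectral_diag_real /mxOverP; apply. Qed.

Lemma tr_psd_ge0 {R : realType} {n} (X Y : 'M[R[i]]_n) : psd X -> psd Y -> 0 <= \tr (X *m Y).
Proof.
move=> hX hY. rewrite {1}(spec_eq (psd_herm hX)) tr_conj.
apply: sumr_ge0 => k _; apply: mulr_ge0; [exact: psd_eig_ge0 | exact: conj_diag_ge0].
Qed.

Lemma Re_le {R : realType} (x y : R[i]) : x <= y -> complex.Re x <= complex.Re y.
Proof. by rewrite lecE => /andP[]. Qed.

Lemma key_ineq {R : realType} {n} (A E : 'M[R[i]]_n) :
  A \is hermsymmx -> psd E -> psd (1%:M - E) ->
  complex.Re (\tr (A *m E)) <= complex.Re (\tr (posproj A *m A)).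
Proof.
move=> hA hE hIE. apply: Re_le.
rewrite /posproj spec_inv.
rewrite tr_conj spec_diag // {1}(spec_eq hA) tr_conj.
apply: ler_sum => k _.
have m0 := @conj_diag_ge0 _ _ _ (spectralmx A) k hE.
have m1 := @conj_diag_ge0 _ _ _ (spectralmx A) k hIE.
rewrite mulmxBr mulmxBl mulmx1 unitL ?spectral_unitarymx // in m1. rewrite !mxE eqxx mulr1n subr_ge0 in m1.
rewrite !mxE eqxx mulr1n.
case: ifP => hs.
- by rewrite mul1r; apply: ler_piMr => //; rewrite hs.
- rewrite mul0r. apply: mulr_le0_ge0 => //.
  apply: ltW. rewrite real_ltNge ?hs ?herm_eig_real ?real0 //. by move: m0; rewrite mxE.
Qed.

Lemma sum_delta {R : realType} m (i : 'I_m) (G : 'I_m -> R[i]) :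
  \sum_(j < m) (i == j)%:R * G j = G i.
Proof.
rewrite (bigD1 i) //= eqxx mul1r big1 ?addr0 // => j /negbTE.
by rewrite eq_sym => ->; rewrite mul0r.
Qed.

Lemma sum_tens {R : realType} m n (F : 'I_(m * n) -> R[i]) :
  \sum_(k < m * n) F k = \sum_(a < m) \sum_(b < n) F (mxtens_index (a, b)).
Proof.
rewrite pair_bigA /=.
rewrite (reindex (@mxtens_unindex m n)) /=.
  by apply: eq_bigr => k _; rewrite mxtens_unindexK.
by exists (@mxtens_index m n) => k _; [rewrite mxtens_unindexK | rewrite mxtens_indexK].
Qed.

Lemma psdD {R : realType} {n} (A B : 'M[R[i]]_n) : psd A -> psd B -> psd (A + B).
Proof.
move=> [hA qA] [hB qB]; split.
- apply/hermP => i j; rewrite !mxE rmorphD.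
  by move/hermP: hA => ->; move/hermP: hB => ->.
- by move=> v; rewrite mulmxDr mulmxDl mxE addr_ge0.
Qed.

Lemma psd0 {R : realType} {n} : psd (0 : 'M[R[i]]_n).
Proof.
split; first by apply/hermP => i j; rewrite !mxE rmorph0.
by move=> v; rewrite mulmx0 mul0mx mxE.
Qed.

Lemma psd_sum {R : realType} {n} (I : finType) (P : pred I) (F : I -> 'M[R[i]]_n) :
  (forall i, P i -> psd (F i)) -> psd (\sum_(i | P i) F i).
Proof.
move=> H; apply: (big_ind (fun X => psd X)) => //; [exact: psd0 | exact: psdD].
Qed.

Lemma conj_real {R : realType} (c : R) : Num.conj (c%:C)%C = (c%:C)%C.
Proof. by apply/eqP; rewrite eq_complex /= eqxx oppr0 eqxx. Qed.

Lemma psdZ {R : realType} {n} (c : R) (A : 'M[R[i]]_n) : 0 <= c -> psd A -> psd ((c%:C)%C *: A).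
Proof.
move=> hc [hA qA]; split.
  move/hermP: hA => hA; apply/hermP => i j; rewrite !mxE rmorphM; congr (_ * _); [exact: (esym (conj_real c)) | exact: hA].
- move=> v; rewrite -scalemxAr -scalemxAl mxE mulr_ge0 //.
  by rewrite ler0c.
Qed.

Lemma sum_only {R : realType} m (i : 'I_m) (F : 'I_m -> R[i]) :
  (forall j, j != i -> F j = 0) -> \sum_(j < m) F j = F i.
Proof. by move=> H; rewrite (bigD1 i) //= big1 ?addr0 // => j /H. Qed.

Lemma psd_block {R : realType} dA dB (rho : 'M[R[i]]_(dA * dB)) (v : 'cV[R[i]]_(dA * dB)) a x :
  psd rho -> 0 <= \sum_(b < dB) \sum_(b' < dB) Num.conj (v (mxtens_index (a, b)) 0) *
     rho (mxtens_index (x, b)) (mxtens_index (x, b')) * v (mxtens_index (a, b')) 0.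
Proof.
case=> _ /(_ (\col_k (((mxtens_unindex k).1 == x)%:R * v (mxtens_index (a, (mxtens_unindex k).2)) 0))).
rewrite qfE sum_tens (@sum_only _ _ x).
- move=> H. apply: (le_trans H). rewrite le_eqVlt; apply/orP; left; apply/eqP.
  apply: eq_bigr => b _. rewrite sum_tens (@sum_only _ _ x).
  + apply: eq_bigr => b' _. by rewrite !mxE !mxtens_indexK /= eqxx !mul1r.
  + move=> y hy. apply: big1 => b' _. by rewrite !mxE !mxtens_indexK /= (negbTE hy) mul0r mulr0.
- move=> j hj; apply: big1 => b _; apply: big1 => l _.
  by rewrite !mxE mxtens_indexK /= (negbTE hj) mul0r rmorph0 !mul0r.
Qed.


Lemma psd_tens {R : realType} dA dB (rho : 'M[R[i]]_(dA * dB)) :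
  psd rho -> psd ((1%:M : 'M[R[i]]_dA) *t ptraceA rho).
Proof.
move=> prho; have [hr qr] := prho; move/hermP: hr => hr; split.
- apply/hermP => i j; rewrite !mxE rmorphM rmorph_sum /=; congr (_ * _).
    by rewrite eq_sym; case: (_ == _); rewrite ?rmorph1 ?rmorph0 /=.
  by apply: eq_bigr => a _; rewrite hr.
- move=> v; rewrite qfE sum_tens.
  rewrite (eq_bigr (fun a => \sum_(x < dA) \sum_(b < dB) \sum_(b' < dB) Num.conj (v (mxtens_index (a, b)) 0) *
     rho (mxtens_index (x, b)) (mxtens_index (x, b')) * v (mxtens_index (a, b')) 0)).
  + apply: sumr_ge0 => a _; apply: sumr_ge0 => x _; exact: psd_block.
  + move=> a _.
    rewrite [RHS]exchange_big /=. apply: eq_bigr => b _.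
    rewrite sum_tens (@sum_only _ _ a).
    * rewrite [RHS]exchange_big /=. apply: eq_bigr => b' _.
      rewrite !mxE !mxtens_indexK /= eqxx mul1r mulr_sumr mulr_suml.
      by apply: eq_bigr => x _; rewrite ?mxE.
    * move=> y hy; apply: big1 => b' _.
      by rewrite !mxE !mxtens_indexK /= eq_sym (negbTE hy) !mul0r mulr0 mul0r.
Qed.

Lemma tr_sum_tens {R : realType} dA dB (X : 'M[R[i]]_(dA * dB)) :
  \tr X = \sum_(a < dA) \sum_(b < dB) X (mxtens_index (a, b)) (mxtens_index (a, b)).
Proof. by rewrite /mxtrace sum_tens. Qed.

Lemma tr_tens {R : realType} dA dB (rho : 'M[R[i]]_(dA * dB)) :
  \tr ((1%:M : 'M[R[i]]_dA) *t ptraceA rho) = dA%:R * \tr rho.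
Proof.
rewrite [LHS]tr_sum_tens.
under eq_bigr => a _ do under eq_bigr => b _ do rewrite tensmxE mxE eqxx mul1r.
rewrite sumr_const card_ord mulr_natl; congr (_ *+ _).
rewrite tr_sum_tens exchange_big /=; apply: eq_bigr => b _; by rewrite mxE.
Qed.

Lemma le_maxI {R : realType} M (hM : (0 < M)%N) (f : 'I_M -> R) i : f i <= maxI hM f.
Proof.
rewrite /maxI. have : i \in index_enum 'I_M by rewrite mem_index_enum.
elim: (index_enum 'I_M) => // a r IH; rewrite inE big_cons le_max => /orP[/eqP ->|/IH ->].
  by rewrite lexx.
by rewrite orbT.
Qed.

Lemma Re_realM {R : realType} (c : R) (z : R[i]) : complex.Re ((c%:C)%C * z) = c * complex.Re z.
Proof. by case: z => a b /=; rewrite mul0r subr0. Qed.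



Lemma hermB {R : realType} {n} (A B : 'M[R[i]]_n) :
  A \is hermsymmx -> B \is hermsymmx -> A - B \is hermsymmx.
Proof.
move=> /hermP h1 /hermP h2; apply/hermP => a b.
by rewrite !mxE rmorphB; congr (_ - _); [exact: h1 | exact: h2].
Qed.

Lemma Re_nat {R : realType} k : complex.Re (k%:R : R[i]) = k%:R.
Proof. by elim: k => // k IH; rewrite !mulrS raddfD /= IH. Qed.

Theorem mainTheorem8 (R : realType) (d n dB M : nat)
  (hd : (0 < d)%N) (hM : (0 < M)%N)
  (rho : 'M[R[i]]_((d ^ n)%N * dB))
  (Ech : 'I_M -> 'M[R[i]]_(d ^ n) -> 'M[R[i]]_(d ^ n))
  (Epovm : 'I_M -> 'M[R[i]]_((d ^ n)%N * dB))
  (gamma : R) :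
  density rho ->
  (forall i, CPTP (Ech i)) ->
  (forall i, psd (Epovm i)) ->
  mxle (\sum_(i < M) Epovm i) 1%:M ->
  let rhoB := ptraceA rho in
  let rho_i := fun i => applyA (Ech i) rho in
  let c := expR (- (n%:R * gamma)) in
  let sigma := (c%:C)%C *: (1%:M *t rhoB) in
  let Pe := M%:R^-1 * \sum_(i < M) (1 - complex.Re (\tr (rho_i i *m Epovm i))) in
  1 - maxI hM (fun i => complex.Re (\tr (geproj (rho_i i) sigma *m (rho_i i - sigma))))
    - expR (n%:R * (ln (d%:R) - gamma)) / M%:R <= Pe.
Proof.
move=> [hrho trrho] hE hpos hsum. cbv zeta.
set rhoB := ptraceA rho.
set rho_i := fun i => applyA (Ech i) rho.
set c := expR (- (n%:R * gamma)).
set sigma := (c%:C)%C *: (1%:M *t rhoB).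
set f := fun i => complex.Re _.
have psd_i : forall i, psd (rho_i i).
  by move=> i; case: (hE i) => _ cp _; exact: cp.
have psd_s : psd sigma by apply: psdZ; [exact: expR_ge0 | exact: psd_tens].
have herm_d : forall i, (rho_i i - sigma) \is hermsymmx.
  by move=> i; apply: hermB; [exact: psd_herm (psd_i i) | exact: psd_herm psd_s].
have hEle : forall i, psd (1%:M - Epovm i).
  move=> i. have -> : 1%:M - Epovm i = (1%:M - \sum_(j < M) Epovm j) + \sum_(j < M | j != i) Epovm j.
    by rewrite (bigD1 i) //= opprD addrA subrK.
  apply: psdD; [exact: hsum | exact: psd_sum].
pose t i := complex.Re (\tr (sigma *m Epovm i)).
have bound : forall i, complex.Re (\tr (rho_i i *m Epovm i)) <= maxI hM f + t i.
  move=> i. have -> : rho_i i = (rho_i i - sigma) + sigma by rewrite subrK.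
  rewrite mulmxDl mxtraceD raddfD /= lerD2r.
  apply: (@le_trans _ _ (f i)); last exact: le_maxI.
  exact: key_ineq (herm_d i) (hpos i) (hEle i).
have sumt : \sum_(i < M) t i <= c * (d ^ n)%:R.
  rewrite /t -raddf_sum /= -linear_sum /= -mulmx_sumr.
  have : 0 <= \tr (sigma *m (1%:M - \sum_(i < M) Epovm i)) by apply: tr_psd_ge0.
  rewrite mulmxBr mulmx1 linearB /= subr_ge0 => /Re_le /le_trans; apply.
  by rewrite /sigma mxtraceZ tr_tens trrho mulr1 Re_realM Re_nat.
have hK : expR (n%:R * (ln (d%:R : R) - gamma)) = c * (d ^ n)%:R.
  rewrite mulrBr expRD expRM_natl lnK ?posrE ?ltr0n // mulrC natrX /c.
  by [].
rewrite hK.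
set S := \sum_(i < M) complex.Re (\tr (rho_i i *m Epovm i)).
set m := maxI hM f.
set K := c * (d ^ n)%:R.
have hM0 : (0 : R) < M%:R by rewrite ltr0n.
have hS : S <= M%:R * m + K.
  apply: le_trans (ler_sum _ (fun i _ => bound i)) _.
  rewrite big_split /= sumr_const card_ord mulr_natl lerD2l.
  exact: sumt.
have eq1 : M%:R^-1 * \sum_(i < M) (1 - complex.Re (\tr (rho_i i *m Epovm i))) = 1 - S / M%:R.
  rewrite sumrB sumr_const card_ord -/S mulrBr mulVf ?pnatr_eq0 -?lt0n //.
  by rewrite mulrC.
rewrite eq1.
have h2 : S / M%:R <= m + K / M%:R.
  have : S / M%:R <= (M%:R * m + K) / M%:R by rewrite ler_wpM2r // invr_ge0 ltW.
  by rewrite mulrDl [M%:R * m]mulrC -mulrA mulfV ?mulr1 // gt_eqF.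
by rewrite -addrA -opprD lerD2l lerN2.
Qed.
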